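(* If $U$ is a $d$-dimensional subspace of $W$, then $$\#\{T\in L(W,V):\mathfrak{I}(T)=U\}=q^{d^2}\prod_{i=d+1}^{k}(q^n-q^i).$$
   Context: Let $\mathbb{F}_q$ be the finite field with $q$ elements, $n\ge k$ positive integers, $V$ an $n$-dimensional $\mathbb{F}_q$-vector space and $W\subseteq V$ a $k$-dimensional subspace. $L(W,V)$ is the space of $\mathbb{F}_q$-linear maps $W\to V$. For $T\in L(W,V)$, $\mathfrak{I}(T)$ denotes the maximal $T$-invariant subspace contained in $W$, i.e. the largest subspace $U\subseteq W$ with $T(U)\subseteq U$. Empty products equal $1$. *)

(* Defs.v *)
(* Subspaces of V = 'rV[F]_n are represented, as in
   mxalgebra, by (row spaces of) matrices; L(W,V) is the set of linear maps
   from the set of vectors of W to V, encoded as finite functions. *)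
From HB Require Import structures.
From mathcomp Require Import all_boot all_algebra all_field.
Set Implicit Arguments. Unset Strict Implicit. Unset Printing Implicit Defensive.
Import GRing.Theory.
Local Open Scope ring_scope.

Definition subW (F : finFieldType) (n : nat) (W : 'M[F]_n) : finType :=
  {x : 'rV[F]_n | (x <= W)%MS}.

Definition is_linW (F : finFieldType) (n : nat) (W : 'M[F]_n)
  (T : {ffun subW W -> 'rV[F]_n}) : bool :=
  [forall a : F, forall x : subW W, forall y : subW W, forall z : subW W,
     (val z == a *: val x + val y) ==> (T z == a *: T x + T y)].

Definition LWV (F : finFieldType) (n : nat) (W : 'M[F]_n)
  : {set {ffun subW W -> 'rV[F]_n}} := [set T | is_linW T].

Definition Tinvariant (F : finFieldType) (n : nat) (W : 'M[F]_n)
  (T : {ffun subW W -> 'rV[F]_n}) (X : 'M[F]_n) : bool :=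
  (X <= W)%MS && [forall x : subW W, (val x <= X)%MS ==> (T x <= X)%MS].

(* I(T) = U : U is the largest T-invariant subspace contained in W *)
Definition is_max_inv (F : finFieldType) (n : nat) (W : 'M[F]_n)
  (T : {ffun subW W -> 'rV[F]_n}) (U : 'M[F]_n) : bool :=
  Tinvariant T U && [forall X : 'M[F]_n, Tinvariant T X ==> (X <= U)%MS].

(* Main.v *)
Require Import Defs.
From HB Require Import structures.
From mathcomp Require Import all_boot all_algebra all_field.
From mathcomp Require Import fingroup perm.
Set Implicit Arguments. Unset Strict Implicit. Unset Printing Implicit Defensive.
Import GRing.Theory.
Local Open Scope ring_scope.

Lemma card_bij (T1 T2 : finType) (f : T1 -> T2) (g : T2 -> T1)
  (P1 : pred T1) (P2 : pred T2) :
  cancel f g -> cancel g f -> (forall x, P2 (f x) = P1 x) ->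
  #|[set x | P1 x]| = #|[set y | P2 y]|.
Proof.
move=> fK gK HP; rewrite -(card_imset _ (can_inj fK)).
apply: eq_card => y; rewrite inE; apply/imsetP/idP => [[x] |].
  by rewrite inE => Px ->; rewrite HP.
by move=> Py; exists (g y); rewrite ?gK // inE -HP gK.
Qed.

Lemma card_sum_fiber (T1 T2 : finType) (f : T1 -> T2) (P : pred T1) :
  #|[set x | P x]| = (\sum_(y : T2) #|[set x | P x && (f x == y)]|)%N.
Proof.
rewrite -sum1_card (partition_big f xpredT) //=.
apply: eq_bigr => y _; rewrite -sum1_card; apply: eq_bigl => x.
by rewrite !inE.
Qed.

Lemma card_fiber (T1 T2 : finType) (f : T1 -> T2) (P : pred T2) (c : nat) :
  (forall y, P y -> #|[set x | f x == y]| = c) ->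
  #|[set x | P (f x)]| = (c * #|[set y | P y]|)%N.
Proof.
move=> Hc; rewrite (card_sum_fiber f) -sum1_card big_distrr /=.
rewrite (bigID P) /= [X in (_ + X)%N]big1 ?addn0 => [|y /negbTE Py].
  apply: eq_big => y; first by rewrite inE.
  move=> Py; rewrite muln1 -(Hc y Py); apply: eq_card => x.
  by rewrite !inE; case: eqP => [->|]; rewrite ?Py ?andbF.
apply: eq_card0 => x; rewrite !inE.
by case: eqP => [->|]; rewrite ?Py ?andbF.
Qed.

Lemma card_pair (T1 T2 : finType) (P : pred (T1 * T2)) :
  #|[set p | P p]| = (\sum_(b : T2) #|[set a | P (a, b)]|)%N.
Proof.
rewrite (card_sum_fiber snd); apply: eq_bigr => b _.
rewrite -[RHS](card_imset _ (fun a a' (h : (a, b) = (a', b)) => congr1 fst h)).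
apply: eq_card => -[a b']; rewrite !inE /=.
apply/idP/imsetP => [/andP [Pp /eqP /= Eb] | [a' ]].
  by exists a; rewrite ?inE -?Eb.
by rewrite inE => Pa [-> ->]; rewrite Pa eqxx.
Qed.

Definition inv (F : finFieldType) j m p (B M : 'M[F]_(j,m)) (Y : 'M[F]_(p,j))
  : bool := (Y *m M <= Y *m B)%MS.

Definition maxinvb (F : finFieldType) j m r (B M : 'M[F]_(j,m))
  (U0 : 'M[F]_(r,j)) : bool :=
  inv B M U0 && [forall Y : 'M[F]_j, inv B M Y ==> (Y <= U0)%MS].

Lemma inv_eqmx (F : finFieldType) j m p p' (B M : 'M[F]_(j,m))
  (Y : 'M[F]_(p,j)) (Y' : 'M[F]_(p',j)) :
  (Y :=: Y')%MS -> inv B M Y = inv B M Y'.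
Proof.
move=> e; rewrite /inv.
by rewrite (eqmxMr M e) (eqmxMr B e).
Qed.

Lemma maxinvP (F : finFieldType) j m r (B M : 'M[F]_(j,m)) (U0 : 'M[F]_(r,j)) :
  reflect (inv B M U0 /\ forall p (Y : 'M_(p,j)), inv B M Y -> (Y <= U0)%MS)
    (maxinvb B M U0).
Proof.
apply: (iffP andP) => [[H /forallP H2] | [H H2]]; split => //.
  move=> p Y iY; rewrite -(genmxE Y); apply: (implyP (H2 _)).
  by rewrite (inv_eqmx _ _ (genmxE Y)).
by apply/forallP => Y; apply/implyP; apply: H2.
Qed.

Lemma inv_transfer (F : finFieldType) j m j1 p (B M : 'M[F]_(j,m))
  (B' M' : 'M[F]_(j1,j)) (Z : 'M[F]_(p,j1)) :
  row_free B -> B' *m M = M' *m B -> inv B M (Z *m B') = inv B' M' Z.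
Proof.
move=> fB e; rewrite /inv -!mulmxA e !mulmxA.
by rewrite submxMfree.
Qed.

Lemma row_free_rows (F : finFieldType) m n (A : 'M[F]_(m,n)) :
  (forall v : 'rV_m, v *m A = 0 -> v = 0) -> row_free A.
Proof. exact: inj_row_free. Qed.

Lemma row_free_dsub (F : finFieldType) m1 m2 n (A : 'M[F]_(m1,n))
  (B : 'M[F]_(m2,n)) : row_free (col_mx A B) -> row_free B.
Proof.
move=> fr; apply: inj_row_free => v vB.
have h : row_mx 0 v *m col_mx A B = 0 *m col_mx A B.
  by rewrite mul_row_col mul0mx add0r vB mul0mx.
by have := row_free_inj fr h => /(congr1 rsubmx); rewrite row_mxKr linear0.
Qed.

Lemma row_free_row0 (F : finFieldType) a b :
  row_free (row_mx (0 : 'M[F]_(b,a)) 1%:M).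
Proof.
apply: inj_row_free => v; rewrite mul_mx_row mulmx0 mulmx1.
by move/(congr1 rsubmx); rewrite row_mxKr linear0.
Qed.

Lemma row_mx0_sub (F : finFieldType) a b p r (A : 'M[F]_(p,b)) (C : 'M[F]_(r,b)) :
  (row_mx (0 : 'M_(p,a)) A <= row_mx (0 : 'M_(r,a)) C)%MS = (A <= C)%MS.
Proof.
have eA : forall s (X : 'M[F]_(s,b)), row_mx (0 : 'M_(s,a)) X = X *m row_mx 0 1%:M.
  by move=> s X; rewrite mul_mx_row mulmx0 mulmx1.
by rewrite (eA _ A) (eA _ C) submxMfree // row_free_row0.
Qed.

Lemma inv_row0 (F : finFieldType) j' m p (be v : 'rV[F]_m) (BH S : 'M[F]_(j',m))
  (Y1 : 'M[F]_(p,j')) :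
  inv (col_mx be BH) (col_mx v S) (row_mx 0 Y1) = inv BH S Y1.
Proof. by rewrite /inv !mul_row_col !mul0mx !add0r. Qed.

Lemma card_sub (F : finFieldType) p r m (A : 'M[F]_(r,m)) :
  #|[set x : 'M[F]_(p,m) | (x <= A)%MS]| = (#|F| ^ (p * \rank A))%N.
Proof.
rewrite -card_mx -cardsT -(card_imset _ (row_free_inj (row_base_free A))).
apply: eq_card => x; rewrite !inE; apply/idP/imsetP => [xA | [c _ ->]].
  exists (x *m pinvmx (row_base A)); rewrite ?inE // mulmxKpV //.
  by rewrite eq_row_base.
by apply: submx_trans (submxMl _ _) _; rewrite eq_row_base.
Qed.

Lemma col_subU (F : finFieldType) m1 m2 n (A : 'M[F]_(m1,n)) (B : 'M[F]_(m2,n)) :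
  (A <= col_mx A B)%MS.
Proof.
have e : row_mx 1%:M 0 *m col_mx A B = A by rewrite mul_row_col mul1mx mul0mx addr0.
by rewrite -[X in (X <= _)%MS]e submxMl.
Qed.

Lemma col_subD (F : finFieldType) m1 m2 n (A : 'M[F]_(m1,n)) (B : 'M[F]_(m2,n)) :
  (B <= col_mx A B)%MS.
Proof.
have e : row_mx 0 1%:M *m col_mx A B = B by rewrite mul_row_col mul1mx mul0mx add0r.
by rewrite -[X in (X <= _)%MS]e submxMl.
Qed.

Lemma opp_sub (F : finFieldType) m1 m2 n (A : 'M[F]_(m1,n)) (C : 'M[F]_(m2,n)) :
  (A <= C)%MS -> (- A <= C)%MS.
Proof. by move=> h; rewrite -scaleN1r scalemx_sub. Qed.

Lemma sub_sub (F : finFieldType) m1 m2 n (A B : 'M[F]_(m1,n)) (C : 'M[F]_(m2,n)) :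
  (A <= C)%MS -> (B <= C)%MS -> (A - B <= C)%MS.
Proof. by move=> hA hB; rewrite addmx_sub // opp_sub. Qed.

Lemma rank_row0 (F : finFieldType) a b r (U : 'M[F]_(r,b)) :
  \rank (row_mx (0 : 'M_(r,a)) U) = \rank U.
Proof.
have -> : row_mx (0 : 'M_(r,a)) U = U *m row_mx 0 1%:M.
  by rewrite mul_mx_row mulmx0 mulmx1.
by rewrite mxrankMfree // row_free_row0.
Qed.

Lemma notmaxP (F : finFieldType) j m r (B M : 'M[F]_(j,m)) (U0 : 'M[F]_(r,j)) :
  inv B M U0 -> ~~ maxinvb B M U0 ->
  exists Y : 'M[F]_j, inv B M Y && ~~ (Y <= U0)%MS.
Proof.
rewrite /maxinvb => -> /=; rewrite negb_forall => /existsP [Y].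
by rewrite negb_imply => h; exists Y.
Qed.

Lemma bad_inD (F : finFieldType) m j' (BH : 'M[F]_(j',m)) (be v : 'rV[F]_m)
  (S : 'M[F]_(j',m)) r (U' : 'M[F]_(r,j')) :
  maxinvb BH S U' ->
  ~~ maxinvb (col_mx be BH) (col_mx v S) (row_mx 0 U') ->
  (v <= col_mx (col_mx be BH) S)%MS.
Proof.
move=> mx nb; have /maxinvP [iU mU] := mx.
have [Y /andP [iY nY]] := notmaxP (etrans (inv_row0 _ _ _ _ _) iU) nb.
rewrite -[Y]hsubmxK in iY nY.
set t := lsubmx Y in iY nY; set y1 := rsubmx Y in iY nY.
have [t0 | ] := eqVneq t 0.
  rewrite t0 inv_row0 in iY; by rewrite t0 row_mx0_sub mU in nY.
move=> tn0.
have : [exists i, exists k, t i k != 0].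
  apply: contraR tn0 => /existsPn h; apply/eqP; apply/matrixP => i k.
  by move: (h i) => /existsPn /(_ k) /negPn /eqP ->; rewrite mxE.
case/existsP => i /existsP [k tik].
have tv : (t *m v <= col_mx (col_mx be BH) S)%MS.
  have -> : t *m v = row_mx t y1 *m col_mx v S - y1 *m S.
    by rewrite mul_row_col addrK.
  apply: sub_sub.
    apply: submx_trans iY _; apply: submx_trans (submxMl _ _) _; exact: col_subU.
  apply: submx_trans (submxMl _ _) _; exact: col_subD.
have e : v = (t i k)^-1 *: row i (t *m v).
  rewrite row_mul (mx11_scalar (row i t)) mul_scalar_mx scalerA.
  rewrite [row i t 0 0]mxE (ord1 k) mulVf ?scale1r //.
  by move: tik; rewrite (ord1 k).
by rewrite e scalemx_sub // (submx_trans (row_sub _ _) tv).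
Qed.


Lemma H1P (F : finFieldType) j' j m p (S : 'M[F]_(j',m)) (B : 'M[F]_(j,m))
  (h : 'M[F]_(p,j')) :
  (h <= kermx (S *m cokermx B))%MS = (h *m S <= B)%MS.
Proof. by rewrite sub_kermx submxE mulmxA. Qed.

Lemma fiber_count (F : finFieldType) j j' m (B : 'M[F]_(j,m)) (S : 'M[F]_(j',m))
  (v : 'rV[F]_m) : row_free B -> (v <= col_mx B S)%MS ->
  #|[set p : 'rV_j * 'rV_j' | p.1 *m B + p.2 *m S == v]| =
  (#|F| ^ \rank (kermx (S *m cokermx B)))%N.
Proof.
move=> fB /submxP [x ex].
set a0 := lsubmx x; set b0 := rsubmx x.
have ev : v = a0 *m B + b0 *m S by rewrite ex -[x]hsubmxK mul_row_col.
set H1 := kermx (S *m cokermx B).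
pose g (h : 'rV_j') := ((v - (b0 + h) *m S) *m pinvmx B, b0 + h).
have ginj : injective g by move=> h h' [_ /addrI].
rewrite -[in RHS](mul1n (\rank H1)) -(card_sub 1 H1) -(card_imset _ ginj).
apply: eq_card => -[a b]; rewrite !inE /=; apply/eqP/imsetP => [eab | [h]].
  exists (b - b0); rewrite ?inE.
    rewrite /H1 H1P mulmxBl.
    have eb : b *m S = v - a *m B by rewrite -eab addrAC subrr add0r.
    have eb0 : b0 *m S = v - a0 *m B by rewrite ev addrAC subrr add0r.
    have -> : b *m S - b0 *m S = (a0 - a) *m B.
      by rewrite eb eb0 opprB addrC addrA addrNK mulmxBl.
    exact: submxMl.
  rewrite /g (addrC b0) subrK; congr (_, _).
  have -> : v - b *m S = a *m B by rewrite -eab addrK.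
  by apply: (row_free_inj fB); rewrite mulmxKpV ?submxMl.
rewrite inE => hH [-> ->].
have e2 : v - (b0 + h) *m S = a0 *m B - h *m S.
  by rewrite ev mulmxDl opprD addrA addrK.
rewrite mulmxKpV ?addrNK // e2 sub_sub ?submxMl //.
by rewrite -H1P.
Qed.

Lemma per_b (F : finFieldType) j' m (BH : 'M[F]_(j',m)) (be : 'rV[F]_m)
  (S : 'M[F]_(j',m)) r (U' : 'M[F]_(r,j')) (b : 'rV[F]_j') :
  let B := col_mx be BH in
  let H1 := kermx (S *m cokermx B) in
  let Hb := row_base H1 in
  let B' := col_mx (row_mx (1%:M : 'M_1) (- b)) (row_mx (0 : 'M_(\rank H1, 1)) Hb) in
  let S' := Hb *m S *m pinvmx B in
  let U3 := U' *m pinvmx Hb in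
  row_free B -> maxinvb BH S U' ->
  [/\ row_free B', maxinvb (row_mx 0 Hb) S' U3 &
     forall a, maxinvb B (col_mx (a *m B + b *m S) S) (row_mx 0 U') =
               maxinvb B' (col_mx a S') (row_mx 0 U3)].
Proof.
move=> B H1 Hb B' S' U3 fB mx; have /maxinvP [iU mU] := mx.
have fHb : row_free Hb by exact: row_base_free.
have p1 : (Hb *m S <= B)%MS by rewrite -H1P eq_row_base.
have eS' : S' *m B = Hb *m S by rewrite mulmxKpV.
have p3 : (U' *m S <= B)%MS.
  apply: submx_trans iU _; apply: submx_trans (submxMl _ _) _; exact: col_subD.
have eU3 : U3 *m Hb = U' by rewrite mulmxKpV // eq_row_base H1P.
have eHB : row_mx (0 : 'M_(\rank H1, 1)) Hb *m B = Hb *m BH.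
  by rewrite mul_row_col mul0mx add0r.
have invHb : forall p (Z : 'M[F]_(p, \rank H1)),
    inv (row_mx 0 Hb) S' Z = inv BH S (Z *m Hb).
  move=> p Z; rewrite /inv -(submxMfree _ _ fB) -[Z *m S' *m B]mulmxA eS'.
  by rewrite -[Z *m _ *m B]mulmxA eHB !mulmxA.
have fB' : row_free B'.
  apply: inj_row_free => x; rewrite -[x]hsubmxK mul_row_col !mul_mx_row.
  rewrite mulmx1 mulmx0 add_row_mx addr0 => e.
  have t0 : lsubmx x = 0 by move/(congr1 lsubmx): e; rewrite row_mxKl linear0.
  have z0 : rsubmx x = 0.
    move/(congr1 rsubmx): e; rewrite row_mxKr linear0 t0 mul0mx add0r => e2.
    by apply: (row_free_inj fHb); rewrite e2 mul0mx.
  by rewrite t0 z0 row_mx0.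
have mx3 : maxinvb (row_mx 0 Hb) S' U3.
  apply/maxinvP; split; first by rewrite invHb eU3.
  by move=> p Z; rewrite invHb => /mU; rewrite -eU3 submxMfree.
split => // a; set v := a *m B + b *m S.
have eBM : B' *m col_mx v S = col_mx a S' *m B.
  rewrite !mul_col_mx !mul_row_col mul1mx mul0mx add0r mulNmx eS'.
  by rewrite /v addrK.
have eU0 : row_mx 0 U3 *m B' = row_mx 0 U'.
  by rewrite mul_row_col mul0mx add0r mul_mx_row mulmx0 eU3.
have sub' : forall p (Y : 'M_(p,1+j')), inv B (col_mx v S) Y -> (Y <= B')%MS.
  move=> p Y; rewrite -[Y]hsubmxK; set t := lsubmx Y; set y1 := rsubmx Y => iY.
  have w : ((t *m b + y1)%R *m S <= B)%MS.
    have e : (t *m b + y1) *m S = row_mx t y1 *m col_mx v S - (t *m a) *m B.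
      apply/eqP; rewrite eq_sym subr_eq; apply/eqP.
      rewrite mulmxDl mul_row_col /v mulmxDr !mulmxA.
      by rewrite [RHS]addrC !addrA.
    rewrite e; apply: sub_sub; last exact: submxMl.
    by apply: submx_trans iY _; exact: submxMl.
  have : ((t *m b + y1)%R <= Hb)%MS by rewrite /Hb eq_row_base /H1 H1P.
  case/submxP => z ez; apply/submxP; exists (row_mx t z).
  rewrite mul_row_col !mul_mx_row mulmx1 mulmx0 add_row_mx addr0 -ez mulmxN.
  by rewrite addKr.
apply/maxinvP/maxinvP => [[_ h] | [_ h]]; split.
- by rewrite inv_row0; case/maxinvP: mx3.
- move=> p Z; rewrite -(inv_transfer Z fB eBM) => /h.
  by rewrite -eU0 submxMfree.
- by rewrite inv_row0.
- move=> p Y iY; have := sub' p Y iY; case/submxP => Z eZ.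
  move: iY; rewrite eZ (inv_transfer Z fB eBM) => /h /(submxMr B').
  by rewrite eU0.
Qed.

Definition LA (F : finFieldType) m := forall j' (BH : 'M[F]_(j',m)) (be : 'rV[F]_m)
  (S : 'M[F]_(j',m)) r (U' : 'M[F]_(r,j')),
  row_free (col_mx be BH) -> maxinvb BH S U' ->
  #|[set v : 'rV[F]_m | ~~ maxinvb (col_mx be BH) (col_mx v S) (row_mx 0 U')]|
  = (#|F| ^ j'.+1)%N.

Lemma lemA (F : finFieldType) m : LA F m.
Proof.
elim/ltn_ind: m => m IH j' BH be S r U' fB mx.
have rB : \rank (col_mx be BH) = (1 + j')%N by apply/eqP.
have hj : (1 + j' <= m)%N by rewrite -rB rank_leq_col.
have [hlt | heq] : (1 + j' < m)%N \/ (1 + j')%N = m.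
  by move: hj; rewrite leq_eqVlt => /orP [/eqP -> | ->]; [right | left].
2:{ have fullB : row_full (col_mx be BH) by rewrite /row_full rB heq.
  have all : forall v, ~~ maxinvb (col_mx be BH) (col_mx v S) (row_mx 0 U').
    move=> v; apply/negP => /maxinvP [_ h].
    have := h _ (1%:M : 'M_(1+j')); rewrite /inv !mul1mx submx_full //.
    move=> /(_ isT) /mxrankS; rewrite mxrank1 rank_row0 => /leq_trans.
    by move=> /(_ _ (rank_leq_col U')); rewrite add1n ltnn.
  apply: etrans (_ : _ = #|{: 'rV[F]_m}|) _.
    by apply: eq_card => v; rewrite !inE all.
  by rewrite card_mx mul1n -heq. }
set B := col_mx be BH.
set H1 := kermx (S *m cokermx B).
pose f (p : 'rV_(1+j') * 'rV_j') := p.1 *m B + p.2 *m S.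
pose bad (v : 'rV_m) := ~~ maxinvb B (col_mx v S) (row_mx 0 U').
have Hf : #|[set p | bad (f p)]| = (#|F| ^ \rank H1 * #|[set v | bad v]|)%N.
  apply: card_fiber => y hy.
  exact: (fiber_count fB (bad_inD mx hy)).
have Hs : #|[set p | bad (f p)]| = (#|F| ^ j' * #|F| ^ (\rank H1).+1)%N.
  rewrite card_pair (eq_bigr (fun _ => (#|F| ^ (\rank H1).+1)%N)).
    by rewrite sum_nat_const card_mx mul1n.
  move=> b _; have [fB' mx3 E] := @per_b F j' m BH be S r U' b fB mx.
  rewrite -(IH _ hlt _ _ _ _ _ _ fB' mx3); apply: eq_card => a.
  by rewrite !inE /bad /f /= E.
have q0 : (0 < #|F|)%N by apply/card_gt0P; exists 0.
have qh : (0 < #|F| ^ \rank H1)%N by rewrite expn_gt0 q0.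
apply/eqP; rewrite -(eqn_pmul2l qh) -Hf Hs.
by rewrite -!expnD !addnS addnC.
Qed.

Lemma restr_max (F : finFieldType) j' m (BH : 'M[F]_(j',m)) (be v : 'rV[F]_m)
  (S : 'M[F]_(j',m)) r (U' : 'M[F]_(r,j')) :
  maxinvb (col_mx be BH) (col_mx v S) (row_mx 0 U') -> maxinvb BH S U'.
Proof.
move=> /maxinvP [iU h]; apply/maxinvP; split; first by rewrite -(inv_row0 be v).
move=> p Y iY; rewrite -(row_mx0_sub 1); apply: h.
by rewrite inv_row0.
Qed.

Lemma basechange (F : finFieldType) j m r (P : 'M[F]_j) (B M : 'M[F]_(j,m))
  (U0 : 'M[F]_(r,j)) : P \in unitmx ->
  maxinvb (invmx P *m B) (invmx P *m M) (U0 *m P) = maxinvb B M U0.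
Proof.
move=> uP; have fP : row_free P by rewrite row_free_unit.
have key : forall p (Y : 'M[F]_(p,j)),
    inv (invmx P *m B) (invmx P *m M) (Y *m P) = inv B M Y.
  by move=> p Y; rewrite /inv !mulmxA !(mulmxK uP).
apply/maxinvP/maxinvP => [[iU h] | [iU h]]; split.
- by rewrite -key.
- move=> p Y iY; rewrite -(submxMfree _ _ fP); apply: h.
  by rewrite key.
- by rewrite key.
- move=> p Y iY.
  have := h p (Y *m invmx P); rewrite -key (mulmxKV uP) => /(_ iY).
  by move/(submxMr P); rewrite (mulmxKV uP).
Qed.

Lemma exP (F : finFieldType) j' r (U0 : 'M[F]_(r, 1 + j')) :
  (\rank U0 < 1 + j')%N ->
  exists2 P : 'M[F]_(1 + j'), P \in unitmx & lsubmx (U0 *m P) = 0.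
Proof.
move=> hd.
set R := row_ebase U0; set L := col_ebase U0.
have uR : R \in unitmx by exact: row_ebase_unit.
exists (invmx R *m tperm_mx 0 ord_max).
  by rewrite unitmx_mul unitmx_inv uR unitmx_perm.
have e1 : U0 *m invmx R = L *m pid_mx (\rank U0).
  by rewrite -{1}(mulmx_ebase U0) (mulmxK uR).
rewrite mulmxA -xcolE e1.
apply/matrixP => i k; rewrite !mxE.
have -> : tperm 0 ord_max (lshift j' k) = ord_max.
  by rewrite (ord1 k) (_ : lshift j' 0 = 0) ?tpermL //; apply: val_inj.
rewrite big1 // => l _; rewrite mxE.
case: eqP => [el | _]; last by rewrite mulr0.
have hd' : (\rank U0 <= j')%N by exact: hd.
by rewrite el /= ltnNge hd' mulr0.
Qed.

Lemma mainC (F : finFieldType) j : forall m (B : 'M[F]_(j,m)) r (U0 : 'M[F]_(r,j)),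
  row_free B ->
  #|[set M : 'M[F]_(j,m) | maxinvb B M U0]| =
  (#|F| ^ (\rank U0 * \rank U0) *
     \prod_((\rank U0).+1 <= i < j.+1) (#|F| ^ m - #|F| ^ i))%N.
Proof.
elim: j => [|j' IH] m B r U0 fB.
  have r0 : \rank U0 = 0%N by apply/eqP; rewrite -leqn0 rank_leq_col.
  rewrite r0 big_geq // muln1 expn0.
  apply: etrans (_ : _ = #|{: 'M[F]_(0,m)}|) _; last by rewrite card_mx.
  apply: eq_card => M; rewrite !inE; apply/maxinvP; split.
    by rewrite /inv (thinmx0 U0) !mul0mx sub0mx.
  by move=> p Y _; rewrite (thinmx0 Y) sub0mx.
have := rank_leq_col U0; rewrite leq_eqVlt => /orP [/eqP full | lt].
  rewrite full big_geq // muln1.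
  have fU : row_full U0 by rewrite /row_full full.
  apply: etrans (_ : _ = #|[set M : 'M[F]_(j'.+1,m) | (M <= B)%MS]|) _.
    apply: eq_card => M; rewrite !inE /maxinvb /inv.
    rewrite (eqmxMfull M fU) (eqmxMfull B fU).
    have fa : [forall Y : 'M[F]_(j'.+1), (Y *m M <= Y *m B)%MS ==> (Y <= U0)%MS].
      by apply/forallP => Y; rewrite (submx_full _ fU) implybT.
    by rewrite fa andbT.
  by rewrite card_sub (eqP fB).
have [P uP eP] := @exP F j' r U0 lt.
set Q := invmx P; set B2 := Q *m B; set U1 := U0 *m P.
have uQ : Q \in unitmx by rewrite unitmx_inv.
have fP : row_free P by rewrite row_free_unit.
have fB2 : row_free B2.
  apply: inj_row_free => x; rewrite /B2 mulmxA => h.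
  have h1 : x *m Q = 0 by apply: (row_free_inj fB); rewrite h mul0mx.
  have fQ : row_free Q by rewrite row_free_unit.
  by apply: (row_free_inj fQ); rewrite h1 mul0mx.
have step1 : #|[set M | maxinvb B M U0]| = #|[set M | maxinvb B2 M U1]|.
  apply: (@card_bij _ _ (fun M => Q *m M) (fun M => P *m M)).
  - by move=> M; rewrite /Q mulKVmx.
  - by move=> M; rewrite /Q mulKmx.
  - by move=> M; rewrite /B2 /U1 basechange.
rewrite step1; clear step1.
set U' := rsubmx (U1 : 'M_(r, 1 + j')).
have eU1 : U1 = row_mx 0 U' by rewrite -[U1]hsubmxK eP.
have rU' : \rank U' = \rank U0.
  by rewrite -(rank_row0 1) -eU1 /U1 mxrankMfree.
set be := usubmx (B2 : 'M_(1 + j', m)); set BH := dsubmx (B2 : 'M_(1 + j', m)).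
have eB2 : B2 = col_mx be BH by rewrite vsubmxK.
rewrite eU1 eB2 -rU'.
rewrite eB2 in fB2.
have fBH : row_free BH by exact: row_free_dsub fB2.
rewrite (@card_bij _ _ (fun M : 'M_(1 + j',m) => (usubmx M, dsubmx M))
   (fun p => col_mx p.1 p.2) _
   (fun p => maxinvb (col_mx be BH) (col_mx p.1 p.2) (row_mx 0 U'))); first last.
- by move=> M /=; rewrite vsubmxK.
- by case=> a b /=; rewrite col_mxKu col_mxKd.
- by move=> M /=; rewrite vsubmxK.
rewrite card_pair /=.
rewrite (eq_bigr (fun S => if maxinvb BH S U' then (#|F| ^ m - #|F| ^ j'.+1)%N
                           else 0%N)); last first.
  move=> S _; case: ifP => mS.
    have hC : #|~: [set v : 'rV[F]_m | maxinvb (col_mx be BH) (col_mx v S) (row_mx 0 U')]|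
       = #|[set v : 'rV[F]_m | ~~ maxinvb (col_mx be BH) (col_mx v S) (row_mx 0 U')]|.
      by apply: eq_card => v; rewrite !inE.
    rewrite -[in (#|F| ^ m)%N](mul1n m) -(card_mx F 1 m) -(cardsC [set v : 'rV[F]_m | maxinvb (col_mx be BH) (col_mx v S) (row_mx 0 U')]) hC (lemA fB2 mS) addnK //.
  apply: eq_card0 => v; rewrite inE; apply/negP => /restr_max.
  by rewrite mS.
rewrite -big_mkcond sum_nat_cond_const IH //.
have ld : ((\rank U').+1 <= j'.+1)%N by rewrite rU'.
by rewrite [in RHS]big_nat_recr //= mulnA.
Qed.

Definition tosub (F : finFieldType) n (W : 'M[F]_n) (x : 'rV[F]_n) : subW W :=
  insubd (exist (fun y : 'rV[F]_n => (y <= W)%MS) 0 (sub0mx 1 W) : subW W) x.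

Lemma tosubK (F : finFieldType) n (W : 'M[F]_n) (x : 'rV[F]_n) :
  (x <= W)%MS -> val (tosub W x) = x.
Proof. by move=> h; rewrite /tosub insubdK. Qed.

Lemma tosub_val (F : finFieldType) n (W : 'M[F]_n) (x : subW W) :
  tosub W (val x) = x.
Proof. by rewrite /tosub valKd. Qed.

Definition phi (F : finFieldType) n (W : 'M[F]_n) (M : 'M[F]_(\rank W, n))
  : {ffun subW W -> 'rV[F]_n} :=
  [ffun x : subW W => val x *m pinvmx (row_base W) *m M].

Definition MT (F : finFieldType) n (W : 'M[F]_n) (T : {ffun subW W -> 'rV[F]_n})
  : 'M[F]_(\rank W, n) :=
  \matrix_(i, l) (T (tosub W (row i (row_base W)))) 0 l.

Lemma pinvB (F : finFieldType) n (W : 'M[F]_n) :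
  row_base W *m pinvmx (row_base W) = 1%:M.
Proof.
apply: (row_free_inj (row_base_free W)).
by rewrite mulmxKpV ?submx_refl // mul1mx.
Qed.

Lemma phi_lin (F : finFieldType) n (W : 'M[F]_n) (M : 'M[F]_(\rank W, n)) :
  phi M \in LWV W.
Proof.
rewrite inE; apply/forallP => a; apply/forallP => x; apply/forallP => y.
apply/forallP => z; apply/implyP => /eqP ez; rewrite !ffunE ez.
by rewrite !mulmxDl -!scalemxAl.
Qed.

Lemma phi_inj (F : finFieldType) n (W : 'M[F]_n) : injective (@phi F n W).
Proof.
move=> M M' e; apply/row_matrixP => i.
have hi : (row i (row_base W) <= W)%MS.
  by rewrite -(eq_row_base W) row_sub.
have := congr1 (fun f : {ffun subW W -> 'rV[F]_n} =>
  f (tosub W (row i (row_base W)))) e.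
by rewrite /= !ffunE tosubK // -!row_mul pinvB !mul1mx.
Qed.

Lemma MT_phi (F : finFieldType) n (W : 'M[F]_n) (T : {ffun subW W -> 'rV[F]_n}) :
  T \in LWV W -> phi (MT T) = T.
Proof.
rewrite inE => /forallP lin.
have Lz : forall (a : F) (u w : 'rV[F]_n), (u <= W)%MS -> (w <= W)%MS ->
    T (tosub W (a *: u + w)) = a *: T (tosub W u) + T (tosub W w).
  move=> a u w hu hw.
  have huw : ((a *: u + w)%R <= W)%MS by rewrite addmx_sub ?scalemx_sub.
  move: (lin a) => /forallP /(_ (tosub W u)) /forallP /(_ (tosub W w)).
  move=> /forallP /(_ (tosub W (a *: u + w))) /implyP.
  by rewrite !tosubK // eqxx => /(_ isT) /eqP.
have L0 : T (tosub W 0) = 0.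
  have h := Lz 1 0 0 (sub0mx _ _) (sub0mx _ _).
  rewrite scaler0 addr0 scale1r in h.
  have : T (tosub W 0) + 0 = T (tosub W 0) + T (tosub W 0) by rewrite addr0 -h.
  by move/addrI => <-.
have key : forall c : 'rV_(\rank W), T (tosub W (c *m row_base W)) = c *m MT T.
  move=> c; rewrite !mulmx_sum_row.
  pose P (y1 y2 : 'rV[F]_n) := (y1 <= W)%MS /\ T (tosub W y1) = y2.
  suff [] : P (\sum_i c 0 i *: row i (row_base W)) (\sum_i c 0 i *: row i (MT T)).
    by [].
  apply: (big_rec2 P) => [|i y1 y2 _ [h1 h2]].
    by split; [exact: sub0mx | exact: L0].
  have hi : (row i (row_base W) <= W)%MS by rewrite -(eq_row_base W) row_sub.
  split; first by rewrite addmx_sub ?scalemx_sub.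
  rewrite Lz ?scalemx_sub // h2; congr (_ *: _ + _).
  by apply/rowP => l; rewrite !mxE.
apply/ffunP => x; rewrite ffunE.
have ex : val x *m pinvmx (row_base W) *m row_base W = val x.
  by rewrite mulmxKpV // eq_row_base (valP x).
by rewrite -key ex tosub_val.
Qed.

Lemma tinv (F : finFieldType) n (W : 'M[F]_n) (M : 'M[F]_(\rank W, n)) (X : 'M[F]_n) :
  Tinvariant (phi M) X =
  (X <= W)%MS && inv (row_base W) M (X *m pinvmx (row_base W)).
Proof.
rewrite /Tinvariant; case hX: (X <= W)%MS => //=.
set B := row_base W.
have XB : X *m pinvmx B *m B = X by rewrite mulmxKpV // /B eq_row_base.
apply/forallP/idP => [h | iY x].
  rewrite /inv XB; apply/row_subP => i; rewrite !row_mul.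
  have hi : (row i X <= W)%MS := submx_trans (row_sub i X) hX.
  have := implyP (h (tosub W (row i X))).
  by rewrite tosubK // row_sub ffunE tosubK // => /(_ isT).
apply/implyP => /submxP [c ec]; rewrite ffunE (_ : val x = c *m X) //.
rewrite -(mulmxA c X (pinvmx B)) -(mulmxA c (X *m pinvmx B) M).
apply: submx_trans (submxMl _ _) _.
by apply: submx_trans iY _; rewrite XB.
Qed.

Lemma phi_max (F : finFieldType) n (W U : 'M[F]_n) (M : 'M[F]_(\rank W, n)) :
  (U <= W)%MS ->
  is_max_inv (phi M) U = maxinvb (row_base W) M (U *m pinvmx (row_base W)).
Proof.
move=> hUW; rewrite /is_max_inv tinv hUW /=.
set B := row_base W; set U0 := U *m pinvmx B.
have fB : row_free B by exact: row_base_free.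
have UB : U0 *m B = U by rewrite mulmxKpV // /B eq_row_base.
apply/andP/maxinvP => [[iU /forallP h] | [iU h]]; split => //.
  move=> p Y iY; have := implyP (h <<Y *m B>>%MS); rewrite tinv.
  have -> : (<<Y *m B>> <= W)%MS.
    by rewrite genmxE; apply: submx_trans (submxMl _ _) _; rewrite /B eq_row_base.
  rewrite (inv_eqmx _ _ (eqmxMr _ (genmxE _))) -mulmxA pinvB mulmx1 iY.
  by move/(_ isT); rewrite genmxE -UB submxMfree.
apply/forallP => X; apply/implyP; rewrite tinv => /andP [hX iX].
have := h _ _ iX; move/(submxMr B); rewrite UB mulmxKpV //.
by rewrite /B eq_row_base.
Qed.

Unset Implicit Arguments.

Theorem theorem3 (F : finFieldType) (n k d : nat) (W U : 'M[F]_n)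
  (hW : \rank W = k) (hUW : (U <= W)%MS) (hU : \rank U = d) :
  #|[set T in LWV W | is_max_inv T U]| =
  (#|F| ^ (d * d) * \prod_(d.+1 <= i < k.+1) (#|F| ^ n - #|F| ^ i))%N.
Proof.
set U0 := U *m pinvmx (row_base W).
have rU0 : \rank U0 = \rank U.
  by rewrite -(mxrankMfree U0 (row_base_free W)) mulmxKpV // eq_row_base.
rewrite -hU -rU0 -hW -(@mainC F (\rank W) n (row_base W) n U0 (row_base_free W)).
rewrite -[RHS](card_imset _ (@phi_inj F n W)).
apply: eq_card => T; rewrite !inE; apply/idP/imsetP => [/andP [TL Tm] | [M]].
  have TL' : T \in LWV W by rewrite inE.
  exists (MT T); last by rewrite (MT_phi TL').
  by rewrite inE -phi_max // (MT_phi TL').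
rewrite inE => hM ->; have := phi_lin M; rewrite inE => ->.
by rewrite phi_max.
Qed.
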